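(* Every trigraph $G$ admits a partial contraction sequence of width at most $4\Delta(G)$ whose final quotient is an asymmetric trigraph $H$ with $\Delta(H)\leq\Delta(G)$.
   Context: A trigraph is a finite simple graph whose edges are each colored red or black; $\Delta$ denotes maximum degree (both colors). A trigraph is asymmetric if the automorphism group of its underlying simple graph is trivial. The red degree of a vertex is the number of red edges incident to it. For a partition $\mathcal{P}$ of $V(G)$, the quotient trigraph $G/\mathcal{P}$ has vertex set $\mathcal{P}$; two distinct parts $U,W$ are joined by a black edge if every pair $\{u,w\}$ with $u\in U,w\in W$ is a black edge of $G$, are non-adjacent if no such pair is an edge, and are joined by a red edge otherwise. A partial contraction sequence of an $n$-vertex trigraph $G$ is a sequence $\mathcal{P}_n,\dots,\mathcal{P}_i$ of partitions of $V(G)$ where $\mathcal{P}_n$ is the partition into singletons and each $\mathcal{P}_j$ arises from $\mathcal{P}_{j+1}$ by merging two parts; its width is the maximum red degree over all $G/\mathcal{P}_j$ in the sequence, and its final quotient is $G/\mathcal{P}_i$. *)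

(* Defs.v *)
From mathcomp Require Import all_boot.
Set Implicit Arguments. Unset Strict Implicit. Unset Printing Implicit Defensive.

(* A trigraph on a finite vertex type V: [adj] is the (underlying simple graph)
   edge relation, [red] marks the red edges; non-red edges are black. *)
Definition is_trigraph (V : finType) (adj red : rel V) : Prop :=
  irreflexive adj /\ symmetric adj /\ symmetric red /\ subrel red adj.

Section Trigraph.
Variables (V : finType) (adj red : rel V).

Definition maxdeg : nat := \max_(v : V) #|[set w | adj v w]|.

Definition qadj (U W : {set V}) : bool :=
  (U != W) && [exists u in U, exists w in W, adj u w].
Definition qblack (U W : {set V}) : bool :=
  (U != W) && [forall u in U, forall w in W, adj u w && ~~ red u w].
Definition qred (U W : {set V}) : bool := qadj U W && ~~ qblack U W.

Definition qdeg (P : {set {set V}}) (U : {set V}) : nat :=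
  #|[set W in P | qadj U W]|.
Definition qreddeg (P : {set {set V}}) (U : {set V}) : nat :=
  #|[set W in P | qred U W]|.

Definition qmaxdeg (P : {set {set V}}) : nat := \max_(U in P) qdeg P U.
Definition qmaxreddeg (P : {set {set V}}) : nat := \max_(U in P) qreddeg P U.

Definition singletons : {set {set V}} := [set [set x] | x : V].

Definition merge_step (P Q : {set {set V}}) : bool :=
  [exists A in P, exists B in P,
     (A != B) && (Q == ((P :\ A) :\ B) :|: [set A :|: B])].

Definition partial_contraction_seq (s : seq {set {set V}}) : bool :=
  path merge_step singletons s.

Definition pcs_width (s : seq {set {set V}}) : nat :=
  \max_(P <- singletons :: s) qmaxreddeg P.

Definition final_partition (s : seq {set {set V}}) : {set {set V}} :=
  last singletons s.

(* the underlying simple graph of G/P has only the trivial automorphism *)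
Definition q_asymmetric (P : {set {set V}}) : Prop :=
  forall f : {set V} -> {set V},
    {in P, forall U, f U \in P} ->
    {in P &, injective f} ->
    {in P &, forall U W, qadj (f U) (f W) = qadj U W} ->
    {in P, forall U, f U = U}.

End Trigraph.

(* Main.v *)
Require Import Defs.
From mathcomp Require Import all_boot zify.
From Stdlib Require Import Classical_Prop.
Set Implicit Arguments. Unset Strict Implicit. Unset Printing Implicit Defensive.

Lemma arith4 (t c m : nat) : 0 < m -> t < c ->
  size (undup [seq ((t + j) %% c) %/ m | j <- iota 0 (2*m)]) <= 4.
Proof.
move=> m0 tc.
have [nw|w] := leqP (t + 2*m) c.
  apply: leq_trans (_ : size (iota (t %/ m) 3) <= 4); last by rewrite size_iota.
  apply: uniq_leq_size; first exact: undup_uniq.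
  move=> e; rewrite mem_undup => /mapP [j]; rewrite mem_iota => /andP [_ hj] ->.
  rewrite mem_iota modn_small; last by lia.
  apply/andP; split; first by apply: leq_div2r; lia.
  nia.
set L := iota (t %/ m) ((c-1)%/m - t%/m + 1) ++ iota 0 ((t+2*m-1-c)%/m + 1).
apply: leq_trans (_ : size L <= 4); last by rewrite size_cat !size_iota; nia.
apply: uniq_leq_size; first exact: undup_uniq.
move=> e; rewrite mem_undup => /mapP [j]; rewrite mem_iota => /andP [_ hj] ->.
rewrite mem_cat !mem_iota.
have [a|b] := ltnP (t + j) c.
  rewrite modn_small //; apply/orP; left.
  apply/andP; split; first by apply: leq_div2r; lia.
  have : (t + j) %/ m <= (c - 1) %/ m by apply: leq_div2r; lia.
  have : t %/ m <= (c - 1) %/ m by apply: leq_div2r; lia.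
  lia.
apply/orP; right; rewrite /=.
have hm : (t + j) %% c <= t + j - c.
  have -> : t + j = (t + j - c) + c by lia.
  rewrite modnDr addnK; exact: leq_mod.
have : ((t + j) %% c) %/ m <= (t + 2 * m - 1 - c) %/ m by apply: leq_div2r; apply: leq_trans hm _; lia.
lia.
Qed.

Lemma arith1 (t c m : nat) : 0 < c -> c <= m -> 0 < m ->
  size (undup [seq ((t + j) %% c) %/ m | j <- iota 0 (2*m)]) <= 1.
Proof.
move=> c0 cm m0.
apply: leq_trans (_ : size [:: 0] <= 1) => //.
apply: uniq_leq_size; first exact: undup_uniq.
move=> e; rewrite mem_undup => /mapP [j] _ ->.
rewrite inE divn_small //.
apply: leq_trans cm; exact: ltn_pmod.
Qed.

Section Keys.
Variable V : finType.

Definition cls (K : eqType) (h : V -> K) (x : V) : {set V} := [set v | h v == h x].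
Definition pok (K : eqType) (h : V -> K) : {set {set V}} := cls h @: setT.

Lemma clsE (K : eqType) (h : V -> K) x v : (v \in cls h x) = (h v == h x).
Proof. by rewrite inE. Qed.

Lemma cls_id (K : eqType) (h : V -> K) x : x \in cls h x.
Proof. by rewrite clsE. Qed.

Lemma cls_eqP (K : eqType) (h : V -> K) x y : cls h x = cls h y <-> h x = h y.
Proof.
split=> [e|e]; last by apply/setP=> v; rewrite !clsE e.
by have := cls_id h x; rewrite e clsE => /eqP.
Qed.

Lemma pok_cls (K : eqType) (h : V -> K) x : cls h x \in pok h.
Proof. by apply/imsetP; exists x. Qed.

Lemma pokP (K : eqType) (h : V -> K) X : X \in pok h -> exists x, X = cls h x.
Proof. by case/imsetP => x _ ->; exists x. Qed.

Lemma pok_eq (K K' : eqType) (h : V -> K) (h' : V -> K') :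
  (forall x y, h x = h y <-> h' x = h' y) -> pok h = pok h'.
Proof.
move=> H; rewrite /pok; apply: eq_imset => x; apply/setP => v.
by rewrite !clsE; apply/eqP/eqP => /H.
Qed.

Lemma merge_card (P Q : {set {set V}}) : merge_step P Q -> #|Q| < #|P|.
Proof.
case/existsP => A /andP [AP /existsP [B /andP [BP /andP [AB /eqP ->]]]].
rewrite setUC cardsU1 (cardsD1 A P) AP (cardsD1 B (P :\ A)).
have -> : B \in P :\ A by rewrite !inE BP eq_sym AB.
by case: (_ \notin _) => /=; lia.
Qed.

Section Merge.
Variables (K : eqType) (h1 : V -> K) (x y : V).
Hypothesis nxy : h1 x != h1 y.
Definition hm (v : V) : K := if h1 v == h1 y then h1 x else h1 v.

Lemma cls_merge v : cls hm v =
  if (h1 v == h1 x) || (h1 v == h1 y) then cls h1 x :|: cls h1 y else cls h1 v.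
Proof.
move: nxy => /eqP nxy'; apply/setP => w; rewrite /hm.
case: (h1 v =P h1 x) => e4; case: (h1 v =P h1 y) => e3 /=; rewrite !inE;
  case: (h1 v =P h1 y) => e3'; try congruence; case: (h1 w =P h1 x) => e2; case: (h1 w =P h1 y) => e1 /=; rewrite ?eqxx /=;
  try (case: eqP; congruence).
all: try done; try (case: eqP; case: eqP; congruence).
Qed.

Lemma merge_pok : merge_step (pok h1) (pok hm).
Proof.
apply/existsP; exists (cls h1 x); rewrite pok_cls /=.
apply/existsP; exists (cls h1 y); rewrite pok_cls /=.
apply/andP; split; first by apply/eqP => /cls_eqP /eqP; rewrite (negbTE nxy).
apply/eqP/setP => X; rewrite !inE; apply/idP/idP.
  case/pokP => v ->; rewrite cls_merge.
  case: ifP => [_|/norP [a b]]; first by rewrite eqxx orbT.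
  rewrite pok_cls !andbT; apply/orP; left; apply/andP; split; apply/eqP => /cls_eqP /eqP.
    by rewrite (negbTE b). by rewrite (negbTE a).
case/orP => [/andP [nB /andP [nA /pokP [v eX]]] | /eqP ->]; first subst X.
  have a : h1 v != h1 x by apply: contra nA => /eqP /cls_eqP ->.
  have b : h1 v != h1 y by apply: contra nB => /eqP /cls_eqP ->.
  have -> : cls h1 v = cls hm v by rewrite cls_merge (negbTE a) (negbTE b).
  exact: pok_cls.
have <- : cls hm x = cls h1 x :|: cls h1 y by rewrite cls_merge eqxx.
exact: pok_cls.
Qed.
End Merge.

Lemma coarsen (K : eqType) (h1 h2 : V -> K) : (forall v w, h1 v = h1 w -> h2 v = h2 w) ->
  exists s, [/\ path (@merge_step V) (pok h1) s, last (pok h1) s = pok h2 &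
     forall R, R \in s -> exists h : V -> K, [/\ R = pok h,
        (forall v w, h1 v = h1 w -> h v = h w) & (forall v w, h v = h w -> h2 v = h2 w)]].
Proof.
move: {2}#|pok h1|.+1 (ltnSn #|pok h1|) => n.
elim: n h1 => [|n IH] h1 hlt H12 //.
case: (boolP [exists x, exists y, (h1 x != h1 y) && (h2 x == h2 y)]).
  case/existsP => x /existsP [y /andP [ne /eqP e2]].
  have M := merge_pok ne.
  have lt := merge_card M.
  have H1' : forall v w, h1 v = h1 w -> hm h1 x y v = hm h1 x y w.
    by move=> v w e; rewrite /hm e.
  have H'2 : forall v w, hm h1 x y v = hm h1 x y w -> h2 v = h2 w.
    move=> v w; rewrite /hm.
    case: (h1 v =P h1 y) => ev; case: (h1 w =P h1 y) => ew e.
    - by rewrite (H12 _ _ ev) (H12 _ _ ew).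
    - by rewrite (H12 _ _ ev) -e2 (H12 _ _ e).
    - by rewrite (H12 _ _ e) e2 (H12 _ _ ew).
    - exact: H12.
  have [s [p l a]] := IH _ (leq_trans lt hlt) H'2.
  exists (pok (hm h1 x y) :: s); split => //=; first by rewrite M.
  move=> R; rewrite inE => /orP [/eqP -> | Rs]; first by exists (hm h1 x y).
  have [h [e1 e3 e4]] := a R Rs; exists h; split => // v w /H1'; exact: e3.
move=> /existsPn H; exists [::]; split => //=.
apply: pok_eq => v w; split; first exact: H12.
move=> e; move: (H v) => /existsPn /(_ w); rewrite e eqxx andbT.
by move/negbNE/eqP.
Qed.

End Keys.

Lemma card_map_factor (T : finType) (A : eqType) (F : nat -> T) (be : nat -> A) s :
  (forall i j, be i = be j -> F i = F j) ->
  #|[set y | y \in map F s]| <= size (undup (map be s)).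
Proof.
move=> H; elim: s => [|a s IH] /=; first by rewrite cards0.
have -> : [set y | y \in F a :: map F s] = F a |: [set y | y \in map F s].
  by apply/setP => y; rewrite !inE.
case: ifP => [/mapP [b bs eb]|_].
  have -> : F a |: [set y | y \in [seq F i | i <- s]] = [set y | y \in [seq F i | i <- s]].
    by apply/setUidPr; rewrite sub1set inE (H _ _ eb) map_f.
  exact: IH.
by rewrite cardsU1 /= -add1n leq_add ?leq_b1.
Qed.

Lemma card_flatten (T : finType) (S : eqType) (F : S -> seq T) (l : seq S) :
  #|[set y | y \in flatten [seq F u | u <- l]]| <= sumn [seq #|[set y | y \in F u]| | u <- l].
Proof.
elim: l => [|a l IH] /=; first by rewrite cards0.
have -> : [set y | y \in F a ++ flatten [seq F u | u <- l]] =
  [set y | y \in F a] :|: [set y | y \in flatten [seq F u | u <- l]].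
  by apply/setP => y; rewrite !inE mem_cat.
by apply: leq_trans (leq_card_setU _ _) _; rewrite leq_add2l.
Qed.

Lemma sumn_le (S : eqType) (f : S -> nat) (l : seq S) M :
  (forall u, u \in l -> f u <= M) -> sumn [seq f u | u <- l] <= M * size l.
Proof.
elim: l => [|a l IH] H //=.
rewrite mulnS; apply: leq_add; first by apply: H; rewrite mem_head.
by apply: IH => u ul; apply: H; rewrite inE ul orbT.
Qed.

Section Red.
Variables (V : finType) (adj : rel V).
Notation KT := ({set V} * nat)%type.
Variables (h0 : V -> KT) (g : {set V} -> {set V}) (D : nat).
Notation P := (pok h0).
Hypotheses (ginj : injective g) (gP : forall U, U \in P -> g U \in P)
 (gadj : forall U W, U \in P -> W \in P -> qadj adj (g U) (g W) = qadj adj U W)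
 (hdeg : forall B, B \in P -> qdeg adj P B <= D).

Definition nd v := cls h0 v.
Definition rt U := froot g U.
Definition ix U := findex g (rt U) U.
Definition od U := order g (rt U).
Definition keyv k v : KT := (rt (nd v), ix (nd v) %/ 2^k).

Lemma fc_root U : fconnect g (rt U) U.
Proof. by rewrite fconnect_sym //; exact: connect_root. Qed.

Lemma iter_ix U : iter (ix U) g (rt U) = U.
Proof. exact: iter_findex (fc_root U). Qed.

Lemma ix_lt U : ix U < od U.
Proof. exact: findex_max (fc_root U). Qed.

Lemma rt_iter j U : rt (iter j g U) = rt U.
Proof. apply/esym/(rootP (fconnect_sym ginj)); exact: fconnect_iter. Qed.

Lemma iterP j U : U \in P -> iter j g U \in P.
Proof. by move=> UP; elim: j => //= j IH; apply: gP. Qed.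

Lemma rtP U : U \in P -> rt U \in P.
Proof.
move=> UP; rewrite /rt -(iter_findex (connect_root (frel g) U)); exact: iterP.
Qed.

Lemma iter_mul_order x q : iter (order g x * q) g x = x.
Proof.
elim: q => [|q IH]; first by rewrite muln0.
by rewrite mulnS iterD IH iter_order.
Qed.

Lemma iter_mod n x : iter n g x = iter (n %% order g x) g x.
Proof. by rewrite {1}(divn_eq n (order g x)) addnC iterD mulnC iter_mul_order. Qed.

Lemma ix_iter j U : ix (iter j g U) = (ix U + j) %% od U.
Proof.
rewrite /ix rt_iter.
have -> : iter j g U = iter (j + ix U) g (rt U) by rewrite iterD iter_ix.
rewrite iter_mod addnC findex_iter //.
by apply: ltn_pmod; exact: order_gt0.
Qed.

Lemma gadj_iter j U W : U \in P -> W \in P ->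
  qadj adj (iter j g U) (iter j g W) = qadj adj U W.
Proof.
move=> UP WP; elim: j => //= j IH; rewrite gadj ?iterP //.
Qed.

Lemma preim j W : W \in P -> exists2 u, u \in P & iter j g u = W.
Proof.
move=> WP; exists (iter ((order g W).-1 * j) g W); first exact: iterP.
by rewrite -iterD -{1}(mul1n j) -mulnDl add1n orderSpred iter_mul_order.
Qed.

Lemma nd_in v : nd v \in P.
Proof. exact: pok_cls. Qed.

Lemma nd_mem v : v \in nd v.
Proof. exact: cls_id. Qed.

Lemma nd_eq z W : W \in P -> z \in W -> nd z = W.
Proof.
by case/pokP => w -> zW; apply/cls_eqP; move: zW; rewrite clsE => /eqP.
Qed.

Lemma keyv0 v w : keyv 0 v = keyv 0 w <-> h0 v = h0 w.
Proof.
split; last by move=> e; rewrite /keyv /nd (cls_eqP h0 v w).2.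
rewrite /keyv expn0 !divn1 => -[e1 e2].
apply/(cls_eqP h0); rewrite -/(nd v) -/(nd w).
by rewrite -(iter_ix (nd v)) -(iter_ix (nd w)) e1 e2.
Qed.

Lemma pok_keyv0 : pok (keyv 0) = P.
Proof. apply: pok_eq => v w; exact: keyv0. Qed.

Lemma keyvS k v w : keyv k v = keyv k w -> keyv k.+1 v = keyv k.+1 w.
Proof.
by rewrite /keyv expnSr !divnMA => -[-> ->].
Qed.

Lemma keyv_nd k v w : nd v = nd w -> keyv k v = keyv k w.
Proof. by rewrite /keyv => ->. Qed.

Definition rep (x : V) (W : {set V}) : V := odflt x [pick z in W].

Lemma rep_in x W : W \in P -> rep x W \in W.
Proof.
case/pokP => w ->; rewrite /rep; case: pickP => [z //|/(_ w)].
by rewrite cls_id.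
Qed.

Lemma deg_between k (h : V -> KT) M :
 (forall v w, keyv k v = keyv k w -> h v = h w) ->
 (forall v w, h v = h w -> keyv k.+1 v = keyv k.+1 w) ->
 (forall u, u \in P -> size (undup [seq ix (iter j g u) %/ 2^k | j <- iota 0 (2^k.+1)]) <= M) ->
 forall X, X \in pok h -> qdeg adj (pok h) X <= M * D.
Proof.
move=> H1 H2 HM X /pokP [x ->].
set U := nd x; set r := rt U; set m := 2^k.+1.
set b := ix U %/ m * m; set B := iter b g r.
have BP : B \in P by apply: iterP; apply: rtP; exact: nd_in.
set NB := [set W in P | qadj adj B W].
pose S u := [seq cls h (rep x (iter j g u)) | j <- iota 0 m].
have sub : [set Y in pok h | qadj adj (cls h x) Y] \subset
           [set Y | Y \in flatten [seq S u | u <- enum NB]].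
  apply/subsetP => Y; rewrite !inE => /andP [/pokP [z0 ->]].
  case/andP => ne /existsP [y /andP [yX /existsP [z /andP [zY ayz]]]].
  move: yX zY; rewrite !clsE => /eqP hy /eqP hz.
  have Yz : cls h z0 = cls h z by apply/cls_eqP.
  have := H2 _ _ hy; rewrite /keyv => -[ry iy].
  set Uy := nd y in ry iy.
  set jy := ix Uy %% m.
  have eUy : Uy = iter jy g B.
    rewrite /B -iterD -{1}(iter_ix Uy) ry -/r; congr iter.
    by rewrite /jy /b -iy addnC -divn_eq.
  have nUz : Uy != nd z.
    apply/negP => /eqP e; move: ne; rewrite Yz.
    have -> : cls h x = cls h z.
      apply/cls_eqP; rewrite -hy; apply: H1; exact: keyv_nd.
    by rewrite eqxx.
  have qa : qadj adj Uy (nd z).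
    rewrite /qadj nUz /=; apply/existsP; exists y; rewrite nd_mem /=.
    by apply/existsP; exists z; rewrite nd_mem.
  have [u uP eu] := preim jy (nd_in z).
  have uN : u \in NB by rewrite inE uP /= -(gadj_iter jy) // eu -eUy.
  apply/flatten_mapP; exists u; first by rewrite mem_enum.
  apply/mapP; exists jy; first by rewrite mem_iota /= ltn_pmod // expn_gt0.
  rewrite Yz eu; apply/cls_eqP; apply: H1; apply: keyv_nd.
  by rewrite (nd_eq (nd_in z) (rep_in x (nd_in z))).
rewrite /qdeg; apply: leq_trans (subset_leq_card sub) _.
apply: leq_trans (card_flatten _ _) _.
apply: leq_trans (sumn_le (M := M) _) _.
  move=> u; rewrite mem_enum inE => /andP [uP _].
  apply: leq_trans (card_map_factor (be := fun j => ix (iter j g u) %/ 2^k) _ _) _; last exact: HM.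
  move=> i j e; apply/cls_eqP; apply: H1.
  rewrite /keyv (nd_eq (iterP i uP) (rep_in x (iterP i uP))).
  by rewrite (nd_eq (iterP j uP) (rep_in x (iterP j uP))) !rt_iter e.
by apply: leq_mul => //; rewrite -cardE; exact: hdeg BP.
Qed.


Lemma mid_bound k (h : V -> KT) :
 (forall v w, keyv k v = keyv k w -> h v = h w) ->
 (forall v w, h v = h w -> keyv k.+1 v = keyv k.+1 w) ->
 qmaxdeg adj (pok h) <= 4 * D.
Proof.
move=> H1 H2; apply/bigmax_leqP => X XP.
apply: (deg_between H1 H2) => // u uP.
have -> : [seq ix (iter j g u) %/ 2 ^ k | j <- iota 0 (2 ^ k.+1)] =
    [seq ((ix u + j) %% od u) %/ 2^k | j <- iota 0 (2 * 2^k)].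
  by rewrite expnS; apply: eq_map => j; rewrite ix_iter.
apply: arith4; [exact: expn_gt0 | exact: ix_lt].
Qed.

Definition KK := #|{set V}|.

Lemma od_small U : od U < 2^KK.
Proof.
apply: leq_ltn_trans (ltn_expl _ (ltnSn 1)).
rewrite /od -size_orbit -(card_uniqP (orbit_uniq _ _)); exact: max_card.
Qed.

Lemma fin_bound : qmaxdeg adj (pok (keyv KK)) <= D.
Proof.
rewrite -(mul1n D); apply/bigmax_leqP => X XP.
apply: (deg_between (k := KK)) => //; first exact: keyvS.
move=> u uP.
have -> : [seq ix (iter j g u) %/ 2 ^ KK | j <- iota 0 (2 ^ KK.+1)] =
    [seq ((ix u + j) %% od u) %/ 2^KK | j <- iota 0 (2 * 2^KK)].
  by rewrite expnS; apply: eq_map => j; rewrite ix_iter.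
apply: arith1; [exact: order_gt0 | exact: ltnW (od_small u) | exact: expn_gt0].
Qed.

Lemma chain k : exists s, [/\ path (@merge_step V) P s, last P s = pok (keyv k) &
  forall R, R \in s -> (exists h : V -> KT, R = pok h) /\ qmaxdeg adj R <= 4 * D].
Proof.
elim: k => [|k [s [p l a]]]; first by exists [::]; split => //=; rewrite pok_keyv0.
have [s2 [p2 l2 a2]] := coarsen (@keyvS k).
exists (s ++ s2); split; first by rewrite cat_path p l.
  by rewrite last_cat l l2.
move=> R; rewrite mem_cat => /orP [/a //|/a2 [h [-> e1 e2]]].
by split; [exists h | exact: mid_bound e1 e2].
Qed.

Lemma path_card_le (Q : {set {set V}}) s : path (@merge_step V) Q s -> #|last Q s| <= #|Q|.
Proof.
elim: s Q => [|R s IH] Q //= /andP [m p].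
exact: leq_trans (IH _ p) (ltnW (merge_card m)).
Qed.

Lemma reduce : (exists2 U0, U0 \in P & g U0 != U0) ->
  exists s, [/\ path (@merge_step V) P s, forall R, R \in s -> qmaxdeg adj R <= 4 * D,
     #|last P s| < #|P|, qmaxdeg adj (last P s) <= D & exists h : V -> KT, last P s = pok h].
Proof.
move=> [U0 U0P nU0].
have [s [p l a]] := chain KK.
exists s; split => //.
- by move=> R /a [].
- case: s p l a => [|R s] /=.
    move=> _ e _; exfalso; move: nU0.
    case/pokP: (U0P) => x0 ex0.
    case/pokP: (gP U0P) => y0 ey0.
    have kx : keyv KK x0 = (rt U0, 0).
      have nx : nd x0 = U0 by rewrite ex0.
      rewrite /keyv nx divn_small //; exact: ltn_trans (ix_lt U0) (od_small U0).
    have ky : keyv KK y0 = (rt U0, 0).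
      have ny : nd y0 = g U0 by rewrite ey0.
      rewrite /keyv ny divn_small; last exact: ltn_trans (ix_lt _) (od_small _).
      by rewrite -[g U0]/(iter 1 g U0) rt_iter.
    have CP : cls (keyv KK) x0 \in P by rewrite e; exact: pok_cls.
    have y0C : y0 \in cls (keyv KK) x0 by rewrite clsE kx ky.
    have eC : cls (keyv KK) x0 = U0.
      by rewrite -(nd_eq CP (cls_id _ x0)) ex0.
    have : nd y0 = g U0 by rewrite ey0.
    have y0U : y0 \in U0 by rewrite -eC.
    have ny2 := nd_eq U0P y0U.
    by move=> ny1; rewrite -ny1 ny2 eqxx.
  case/andP => m p _ _; exact: leq_ltn_trans (path_card_le p) (merge_card m).
- by rewrite l; exact: fin_bound.
- by exists (keyv KK).
Qed.

End Red.

Section Main.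
Variables (V : finType) (adj red : rel V).
Notation KT := ({set V} * nat)%type.
Notation D := (maxdeg adj).

Lemma sing_pok : singletons V = pok (fun v : V => ([set v], 0)).
Proof.
apply/setP => X; apply/imsetP/imsetP => [[x _ ->]|[x _ ->]]; exists x => //.
  by apply/setP => v; rewrite !inE xpair_eqE eqxx andbT; apply/eqP/eqP => [->|/set1_inj].
by apply/setP => v; rewrite !inE xpair_eqE eqxx andbT; apply/eqP/eqP => [/set1_inj|->].
Qed.

Lemma sing_deg : qmaxdeg adj (singletons V) <= D.
Proof.
apply/bigmax_leqP => X /imsetP [x _ ->].
rewrite /qdeg.
have sub : [set W in singletons V | qadj adj [set x] W] \subset
   [set [set w] | w in [set w | adj x w]].
  apply/subsetP => W; rewrite inE => /andP [/imsetP [w _ ->]].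
  case/andP => _ /existsP [u /andP [ux /existsP [w' /andP [w'w a]]]].
  apply/imsetP; exists w => //; rewrite inE.
  by move: ux w'w a; rewrite !inE => /eqP -> /eqP ->.
apply: leq_trans (subset_leq_card sub) _.
apply: leq_trans (leq_imset_card _ _) _.
exact: (leq_bigmax_cond (F := fun v => #|[set w | adj v w]|) x).
Qed.

Lemma red_le R : qmaxreddeg adj red R <= qmaxdeg adj R.
Proof.
apply/bigmax_leqP => X XR.
rewrite /qmaxdeg; apply: (leq_trans _ (@leq_bigmax_cond _ (fun U => U \in R) (qdeg adj R) X XR)).
apply: subset_leq_card; apply/subsetP => W; rewrite !inE => /andP [-> /=].
by rewrite /qred => /andP [].
Qed.

Lemma extract (P : {set {set V}}) : ~ q_asymmetric adj P ->
  exists f : {set V} -> {set V}, [/\ {in P, forall U, f U \in P}, {in P &, injective f},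
    {in P &, forall U W, qadj adj (f U) (f W) = qadj adj U W} & exists2 U, U \in P & f U != U].
Proof.
move=> na; apply: NNPP => hn; apply: na => f h1 h2 h3 U UP.
apply/eqP; apply/negPn/negP => ne; apply: hn; exists f; split => //; by exists U.
Qed.

Lemma main_ind n : forall (h0 : V -> KT) s0, #|pok h0| < n ->
  path (@merge_step V) (singletons V) s0 -> last (singletons V) s0 = pok h0 ->
  (forall R, R \in singletons V :: s0 -> qmaxdeg adj R <= 4 * D) ->
  qmaxdeg adj (pok h0) <= D ->
  exists s, [/\ path (@merge_step V) (singletons V) s,
    (forall R, R \in singletons V :: s -> qmaxdeg adj R <= 4 * D),
    q_asymmetric adj (last (singletons V) s) & qmaxdeg adj (last (singletons V) s) <= D].
Proof.
elim: n => [|n IH] h0 s0 // hlt p0 l0 a0 d0.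
case: (classic (q_asymmetric adj (pok h0))) => [asy|nasy].
  by exists s0; split => //; rewrite l0.
have [f [f1 f2 f3 [U0 U0P nU0]]] := extract nasy.
pose g U := if U \in pok h0 then f U else U.
have ginj : injective g.
  move=> U W; rewrite /g; case: ifP => UP; case: ifP => WP.
  - exact: f2.
  - by move=> e; move: (f1 _ UP); rewrite e WP.
  - by move=> e; move: (f1 _ WP); rewrite -e UP.
  - by [].
have gP : forall U, U \in pok h0 -> g U \in pok h0 by move=> U UP; rewrite /g UP f1.
have gadj : forall U W, U \in pok h0 -> W \in pok h0 -> qadj adj (g U) (g W) = qadj adj U W.
  by move=> U W UP WP; rewrite /g UP WP f3.
have hdeg : forall B, B \in pok h0 -> qdeg adj (pok h0) B <= D.
  move=> B BP; apply: leq_trans d0; rewrite /qmaxdeg; exact: (@leq_bigmax_cond _ (fun U => U \in pok h0) (qdeg adj (pok h0)) B BP).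
have ex : exists2 U1, U1 \in pok h0 & g U1 != U1 by exists U0; rewrite // /g U0P.
have [s [p a c d [h e]]] := reduce ginj gP gadj hdeg ex.
apply: (IH h (s0 ++ s)).
- by rewrite -e; apply: leq_trans c _; rewrite -ltnS.
- by rewrite cat_path p0 l0.
- by rewrite last_cat l0.
- move=> R; rewrite -cat_cons mem_cat => /orP [/a0 //|/a //].
- by rewrite -e.
Qed.

End Main.

Theorem mainTheorem15 (V : finType) (adj red : rel V) :
  is_trigraph adj red ->
  exists s : seq {set {set V}},
    [/\ partial_contraction_seq s,
        pcs_width adj red s <= 4 * maxdeg adj,
        q_asymmetric adj (final_partition s)
      & qmaxdeg adj (final_partition s) <= maxdeg adj].
Proof.
move=> _.
have sd := sing_deg adj.
have A1 : forall R, R \in [:: singletons V] -> qmaxdeg adj R <= 4 * maxdeg adj.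
  by move=> R; rewrite inE => /eqP ->; apply: leq_trans sd _; rewrite leq_pmull.
have A2 : qmaxdeg adj (pok (fun v : V => ([set v], 0))) <= maxdeg adj by rewrite -sing_pok.
have [s [p a q d]] := @main_ind V adj (#|pok (fun v : V => ([set v], 0))|.+1)
   (fun v : V => ([set v], 0)) [::] (ltnSn _) erefl (sing_pok V) A1 A2.
exists s; split => //.
rewrite /pcs_width big_seq; apply: (big_ind (fun x => x <= 4 * maxdeg adj)) => //.
  by move=> x y hx hy; rewrite geq_max hx hy.
move=> R Rs; apply: leq_trans (red_le adj red R) _; exact: a.
Qed.
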